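(* Let $X,Y$ be non-empty subsets of $\mathbb{R}^2$, let $\eta\in\mathbb{R}\setminus\{0\}$, $\xi\in\mathbb{N}^*$, $\varepsilon>0$ and $A\in\mathrm{SL}(2,\mathbb{Z})$. If $Y\subseteq B_\varepsilon(X)$, then $A\circ J_{\eta,\xi}\circ A^{-1}(Y)\subseteq B_\varepsilon(\mathrm{Str}(X,A(0,\eta)))$.
   Context: $B_\varepsilon(Z)$ is the open $\varepsilon$-neighbourhood of $Z$. $\mathrm{Str}(X,w)=X+[-w,w]$ (Minkowski sum with the segment joining $-w$ and $w$). For $\xi\in\mathbb{N}^*$, $\phi_\xi(x)=(-1)^{z+1}(4\xi x-2z-1)$ for $z\in\mathbb{Z}$, $x\in[\frac{z}{2\xi},\frac{z+1}{2\xi})$, and $J_{\eta,\xi}(x,y)=(x,y+\eta\phi_\xi(x))$. *)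

(* Defs.v *)
From Stdlib Require Import Reals Lra Lia ZArith.
Open Scope R_scope.

Definition pt := (R * R)%type.

Definition dist2 (p q : pt) : R :=
  sqrt ((fst p - fst q)^2 + (snd p - snd q)^2).

Definition Bnbhd (eps : R) (Z : pt -> Prop) : pt -> Prop :=
  fun p => exists z, Z z /\ dist2 p z < eps.

Definition Str (X : pt -> Prop) (w : pt) : pt -> Prop :=
  fun p => exists x t, X x /\ -1 <= t <= 1 /\
    p = (fst x + t * fst w, snd x + t * snd w).

Definition img (f : pt -> pt) (Y : pt -> Prop) : pt -> Prop :=
  fun p => exists y, Y y /\ p = f y.

Definition subset2 (U V : pt -> Prop) : Prop := forall p, U p -> V p.

(* floor via Stdlib's up: up x is the unique integer with x < up x <= x + 1 *)
Definition floorR (x : R) : Z := (up x - 1)%Z.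

Definition phi (xi : nat) (x : R) : R :=
  let z := floorR (2 * INR xi * x) in
  powerRZ (-1) (z + 1) * (4 * INR xi * x - 2 * IZR z - 1).

Definition J (eta : R) (xi : nat) (p : pt) : pt :=
  (fst p, snd p + eta * phi xi (fst p)).

Record SL2Z := { ma : Z; mb : Z; mc : Z; md : Z;
                 mdet : (ma * md - mb * mc = 1)%Z }.

Definition Aapp (A : SL2Z) (p : pt) : pt :=
  (IZR (ma A) * fst p + IZR (mb A) * snd p,
   IZR (mc A) * fst p + IZR (md A) * snd p).

(* the inverse matrix [[d,-b],[-c,a]] (determinant 1) *)
Definition Ainv (A : SL2Z) (p : pt) : pt :=
  (IZR (md A) * fst p - IZR (mb A) * snd p,
   - IZR (mc A) * fst p + IZR (ma A) * snd p).

(* Main.v *)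
Require Import Defs.
From Stdlib Require Import Reals ZArith Lra.
Open Scope R_scope.

Lemma powm1_abs (n : Z) : Rabs (powerRZ (-1) n) = 1.
Proof.
  destruct n as [|p|p]; simpl.
  - apply Rabs_R1.
  - apply pow_1_abs.
  - rewrite Rabs_inv, pow_1_abs; apply Rinv_1.
Qed.

Lemma phi_bound (xi : nat) (x : R) : Rabs (phi xi x) <= 1.
Proof.
  unfold phi, floorR.
  set (v := 2 * INR xi * x).
  destruct (archimed v) as [H1 H2].
  rewrite Rabs_mult, powm1_abs, Rmult_1_l.
  rewrite minus_IZR. simpl (IZR 1).
  apply Rabs_le. unfold v in *. split; lra.
Qed.

Theorem mainTheorem13 (X Y : pt -> Prop) (eta : R) (xi : nat) (eps : R) (A : SL2Z) :
  (exists x, X x) -> (exists y, Y y) ->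
  eta <> 0 -> (0 < xi)%nat -> 0 < eps ->
  subset2 Y (Bnbhd eps X) ->
  subset2 (img (fun p => Aapp A (J eta xi (Ainv A p))) Y)
          (Bnbhd eps (Str X (Aapp A (0, eta)))).
Proof.
  intros _ _ _ _ _ HY p [y [Hy ->]].
  destruct (HY y Hy) as [x [Hx Hd]].
  set (t := phi xi (fst (Ainv A y))).
  assert (Ht : Rabs t <= 1) by apply phi_bound.
  assert (Ht1 := Rle_abs t); assert (Ht2 := Rle_abs (- t)); rewrite Rabs_Ropp in Ht2.
  assert (Ht3 : -1 <= t <= 1) by lra.
  assert (Hdet : IZR (ma A) * IZR (md A) - IZR (mb A) * IZR (mc A) = 1).
  { rewrite <- !mult_IZR, <- minus_IZR, (mdet A). reflexivity. }
  exists (fst x + t * fst (Aapp A (0, eta)), snd x + t * snd (Aapp A (0, eta))).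
  split.
  - exists x, t. auto.
  - destruct x as [x1 x2], y as [y1 y2].
    unfold dist2 in *. unfold J, Aapp, Ainv in *. fold t. simpl in *.
    replace ((IZR (ma A) * (IZR (md A) * y1 - IZR (mb A) * y2) +
      IZR (mb A) * (- IZR (mc A) * y1 + IZR (ma A) * y2 + eta * t) -
      (x1 + t * (IZR (ma A) * 0 + IZR (mb A) * eta)))) with ((IZR (ma A) * IZR (md A) - IZR (mb A) * IZR (mc A)) * y1 - x1)
      by ring.
    replace ((IZR (mc A) * (IZR (md A) * y1 - IZR (mb A) * y2) +
      IZR (md A) * (- IZR (mc A) * y1 + IZR (ma A) * y2 + eta * t) -
      (x2 + t * (IZR (mc A) * 0 + IZR (md A) * eta)))) with ((IZR (ma A) * IZR (md A) - IZR (mb A) * IZR (mc A)) * y2 - x2)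
      by ring.
    rewrite Hdet, !Rmult_1_l.
    exact Hd.
Qed.
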